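(* Let $n>(p+s)^4$ be an integer. For any $i \in \{1,2,\ldots,p-1+s\}$ and any $k \in \{1,2,\ldots,n\}$, we have $\Phi_{n}^{-1} d_n^{p-1+s-i} r_{i,k} \in \mathbb{Z}$, where \[\Phi_{n} := \prod_{\substack{\sqrt{pn} < q \leqslant n \\ q~\text{prime}}} q^{\phi\left( n/q \right)},\qquad \phi(x) := \begin{cases} 0, & \{x\} \in \left[0,\frac{2}{p}\right), \\ j-1, & \{x\} \in \left[\frac{j}{p},\frac{j+1}{p}\right),\ j=2,3,\ldots,p-1,\end{cases}\] and $\{x\}=x-\lfloor x\rfloor$.
   Context: Let $p\geqslant 5$ be a prime and $s$ a positive integer. Write $v_p$ for the $p$-adic valuation, $(\alpha)_k=\alpha(\alpha+1)\cdots(\alpha+k-1)$, and $d_n=\operatorname{LCM}\{1,2,\ldots,n\}$. Put $N_0=v_p(p-1+s)$ and $M_0=p^{2+N_0}s-1$. For an integer $n>(p+s)^4$ let \[R_n(t)=p^{pn}\, n!^s\, t^{M_0}\,\frac{\prod_{j=1}^{p-1}(t+\frac{j}{p})_n}{(t)_{n+1}^{p-1+s}}\in\mathbb{Q}(t),\] with partial fraction decomposition $R_n(t)=\sum_{i=1}^{p-1+s}\sum_{k=1}^{n} r_{i,k}(t+k)^{-i}$, $r_{i,k}\in\mathbb{Q}$. *)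

(* Defs.v *)
From mathcomp Require Import all_boot all_order all_algebra.
Set Implicit Arguments. Unset Strict Implicit. Unset Printing Implicit Defensive.
Import Order.TTheory GRing.Theory Num.Theory.
Local Open Scope ring_scope.

Definition poch (a : rat) (k : nat) : rat := \prod_(i < k) (a + i%:R).

Definition dn (n : nat) : nat := \big[lcmn/1%N]_(1 <= j < n.+1) j.

Definition N0 (p s : nat) : nat := logn p (p - 1 + s).
Definition M0 (p s : nat) : nat := (p ^ (2 + N0 p s) * s - 1)%N.

Definition Rn (p s n : nat) (t : rat) : rat :=
  (p ^ (p * n))%:R * (n`! ^ s)%:R * t ^+ M0 p s
  * (\prod_(1 <= j < p) poch (t + j%:R / p%:R) n)
  / (poch t n.+1) ^+ (p - 1 + s).

Definition fracq (x : rat) : rat := x - (Num.floor x)%:~R.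

(* phi(x) = 0 if {x} in [0,2/p), j-1 if {x} in [j/p,(j+1)/p), j = 2..p-1.
   Here j = floor(p {x}) is the unique j with {x} in [j/p,(j+1)/p). *)
Definition phi (p : nat) (x : rat) : nat :=
  let j := Num.floor (p%:R * fracq x) in
  if (j < 2)%R then 0%N else `|j - 1|%N.

(* Phi_n = prod over primes q with sqrt(pn) < q <= n of q^phi(n/q);
   sqrt(pn) < q is written as p n < q^2. *)
Definition Phin (p n : nat) : nat :=
  \prod_(q < n.+1 | prime q && (p * n < q ^ 2)%N) (q : nat) ^ phi p (n%:R / q%:R).

(* Main.v *)
Require Import Defs.
From mathcomp Require Import all_boot all_order all_algebra.
From mathcomp Require Import zify ring lra.
Import Order.TTheory GRing.Theory Num.Theory.
Set Implicit Arguments. Unset Strict Implicit. Unset Printing Implicit Defensive.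

Lemma dvdn_logn a b : 0 < a -> 0 < b ->
  (forall q, prime q -> logn q a <= logn q b) -> a %| b.
Proof.
move=> a0 b0 H; apply/dvdn_partP => // q; rewrite mem_primes => /andP[pq _].
by rewrite p_part pfactor_dvdn // H.
Qed.

Lemma sum_bound (P : pred nat) E L :
  (forall e, P e -> e <= L) -> \sum_(1 <= e < E) P e <= L.
Proof.
move=> H; have: \sum_(1 <= e < E) P e <= \sum_(1 <= e < E) (e <= L).
  by apply: leq_sum => e _; case: (P e) (H e) => // ->.
move/leq_trans; apply.
have h: forall F, \sum_(1 <= e < F.+1) (e <= L) = minn F L.
  elim=> [|F IH]; first by rewrite big_geq // min0n.
  rewrite big_nat_recr //= IH; case: leqP => h; lia.
case: E => [|E]; first by rewrite big_geq.
by rewrite h geq_minr.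
Qed.

Lemma count_dvd Q N : 0 < Q -> \sum_(1 <= b < N.+1) (Q %| b) = N %/ Q.
Proof.
move=> Q0; elim: N => [|N IH]; first by rewrite big_geq // div0n.
by rewrite big_nat_recr //= IH divnS // addnC.
Qed.

Lemma logn_prod q (I : Type) (r : seq I) (P : pred I) (F : I -> nat) :
  (forall i, P i -> 0 < F i) ->
  logn q (\prod_(i <- r | P i) F i) = \sum_(i <- r | P i) logn q (F i).
Proof.
move=> HF; elim: r => [|x r IH]; first by rewrite !big_nil logn1.
rewrite !big_cons; case: ifP => // Px.
by rewrite lognM ?IH ?HF // prodn_cond_gt0.
Qed.

Definition Gam d N := \prod_(1 <= b < N.+1) gcdn b d.

Lemma Gam_gt0 d N : 0 < d -> 0 < Gam d N.
Proof. by move=> d0; rewrite /Gam prodn_gt0 // => b; rewrite gcdn_gt0 d0 orbT. Qed.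

Lemma logn_Gam q d N n E : prime q -> 0 < d ->
  (forall e, q ^ e <= n -> q ^ e %| d) ->
  \sum_(1 <= e < E) (q ^ e <= n) * (N %/ q ^ e) <= logn q (Gam d N).
Proof.
move=> pq d0 Hd; rewrite /Gam logn_prod; last by move=> b _; rewrite gcdn_gt0 d0 orbT.
have step: forall b, \sum_(1 <= e < E) ((q ^ e <= n) && (q ^ e %| b)) <= logn q (gcdn b d).
  move=> b; apply: sum_bound => e /andP[h1 h2].
  by rewrite -pfactor_dvdn ?gcdn_gt0 ?d0 ?orbT // dvdn_gcd h2 Hd.
apply: leq_trans (_ : _ <= \sum_(1 <= b < N.+1) \sum_(1 <= e < E) ((q ^ e <= n) && (q ^ e %| b))) _; last first.
  by apply: leq_sum => b _; apply: step.

rewrite exchange_big_nat /=; apply: leq_sum => e _.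
have q0: 0 < q ^ e by rewrite expn_gt0 prime_gt0.
rewrite -count_dvd // big_distrr /=; apply: leq_sum => b _.
by case: (q ^ e <= n); case: (q ^ e %| b).
Qed.

Lemma logn_fact_ext q k n E : prime q -> k <= n -> n < E ->
  logn q k`! = \sum_(1 <= e < E) (q ^ e <= n) * (k %/ q ^ e).
Proof.
move=> pq kn nE.
have q1 : 1 < q by apply: prime_gt1.
transitivity (\sum_(1 <= e < E) k %/ q ^ e); last first.
  apply: eq_bigr => e _; case: leqP => h; first by rewrite mul1n.
  by rewrite mul0n divn_small // (leq_ltn_trans kn h).
rewrite logn_fact // [RHS](big_cat_nat _ (n := k.+1)) //=; last by apply: leq_trans nE.

rewrite [X in _ = _ + X]big1_seq ?addn0 // => e /andP[_].
rewrite mem_index_iota => /andP[ke _]; apply: divn_small.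
by apply: leq_trans ke (ltnW (ltn_expl e q1)).
Qed.

Lemma logn_Phin q p n : prime q ->
  logn q (Phin p n) <= (if (q <= n) && (p * n < q ^ 2) then phi p (n%:R / q%:R)%R else 0).
Proof.
move=> pq; rewrite /Phin logn_prod; last first.
  by move=> i /andP[pi _]; rewrite expn_gt0 prime_gt0.

under eq_bigr => i /andP[pi _] do rewrite lognX logn_prime //.
case: ifP => [/andP[qn rel]|nrel].
  rewrite (bigD1 (Ordinal (qn : q < n.+1))) /= ?pq ?rel //= eqxx muln1.
  rewrite big1 ?addn0 // => i /andP[_ ne]; rewrite eq_sym.
  by move: ne; rewrite -val_eqE /= => /negPf ->; rewrite ?muln0.
rewrite leqn0 sum_nat_eq0; apply/forallP => i; apply/implyP => /andP[pi ri].
case: (q =P i) => [e|ne]; last by rewrite muln0.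
by move: nrel; rewrite e ri -ltnS ltn_ord.
Qed.

Local Open Scope ring_scope.

Lemma natdiv_rat a q : (0 < q)%N ->
  (a%:R / q%:R : rat) = (a %/ q)%:R + (a %% q)%:R / q%:R.
Proof.
move=> q0; have qne : (q%:R : rat) != 0 by rewrite pnatr_eq0 -lt0n.
by rewrite {1}(divn_eq a q) natrD natrM mulrDl mulfK.
Qed.

Lemma floor_natdiv a q : (0 < q)%N -> Num.floor (a%:R / q%:R : rat) = (a %/ q)%:Z.
Proof.
move=> q0; apply: floor_def; rewrite natdiv_rat //.
have qp : (0 : rat) < q%:R by rewrite ltr0n.
have h1 : (0 : rat) <= (a %% q)%:R / q%:R by rewrite divr_ge0 ?ler0n ?ltW.
have h2 : ((a %% q)%:R / q%:R : rat) < 1.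
  by rewrite ltr_pdivrMr // mul1r ltr_nat ltn_mod.
rewrite -[((a %/ q)%:Z)%:~R]/((a %/ q)%:R) intrD -[((a %/ q)%:Z)%:~R]/((a %/ q)%:R).
rewrite lerDl h1 /= ltrD2l //.
Qed.

Lemma phi_nat p n q : (0 < q)%N ->
  phi p (n%:R / q%:R) = (if (p * (n %% q)) %/ q < 2 then 0 else (p * (n %% q)) %/ q - 1)%N.
Proof.
move=> q0; rewrite /phi /Defs.fracq floor_natdiv // natdiv_rat //.
have -> : ((n %/ q)%:R + (n %% q)%:R / q%:R - ((n %/ q)%:Z)%:~R : rat) = (n %% q)%:R / q%:R.
  by rewrite -[((n %/ q)%:Z)%:~R]/((n %/ q)%:R); ring.
rewrite mulrA -natrM floor_natdiv // ltz_nat.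
case: ltnP => // h.
have h1 : (1 <= (p * (n %% q)) %/ q)%N by apply: leq_trans h.
by rewrite subzn // absz_nat.
Qed.

Local Close Scope ring_scope.

Lemma dn_gt0 n : 0 < dn n.
Proof.
rewrite /dn; elim: n => [|n IH]; first by rewrite big_geq.
by rewrite big_nat_recr //= lcmn_gt0 IH.
Qed.

Lemma dn_dvd n c : 0 < c -> c <= n -> c %| dn n.
Proof.
rewrite /dn; elim: n => [|n IH] c0 cn; first by move: c0 cn; case: c.
rewrite big_nat_recr //=; case: (ltngtP c n.+1) => [h||->]; last 2 first.
- by move: cn; rewrite leqNgt => /negP.
- exact: dvdn_lcmr.
by apply: dvdn_trans (IH c0 h) (dvdn_lcml _ _).
Qed.

Lemma mul_div_le p k Q : 0 < Q -> p * (k %/ Q) <= (p * k) %/ Q.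
Proof. by move=> Q0; rewrite leq_divRL // -mulnA leq_mul2l leq_divM orbT. Qed.

Lemma phi_bound p n k q : prime q -> k <= n ->
  p * (k %/ q) + p * ((n - k) %/ q) + phi p (n%:R / q%:R)%R
  <= (p * k) %/ q + (p * (n - k)) %/ q.
Proof.
move=> pq kn; have q0 := prime_gt0 pq.
rewrite phi_nat //.
have e1 : (p * k) %/ q = p * (k %/ q) + (p * (k %% q)) %/ q.
  by rewrite {1}(divn_eq k q) mulnDr mulnA divnMDl.
have e2 : (p * (n - k)) %/ q = p * ((n - k) %/ q) + (p * ((n - k) %% q)) %/ q.
  by rewrite {1}(divn_eq (n - k) q) mulnDr mulnA divnMDl.
rewrite e1 e2.
have hm : n %% q <= k %% q + (n - k) %% q.
  by have := leq_mod (k %% q + (n - k) %% q) q; rewrite modnDm subnKC.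
have hj : (p * (n %% q)) %/ q <= (p * (k %% q)) %/ q + (p * ((n - k) %% q)) %/ q + 1.
  apply: leq_trans (leq_divDl _ _ _); apply: leq_div2r.
  by rewrite -mulnDr leq_mul2l hm orbT.
move: hj; case: ltnP => _; move=> {e1 e2 hm};
move: ((p * (n %% q)) %/ q) ((p * (k %% q)) %/ q) ((p * ((n - k) %% q)) %/ q) (p * (k %/ q)) (p * ((n - k) %/ q)) => J A B X Y; lia.
Qed.

Lemma key_ineq p n k q : prime q -> 0 < p -> k <= n ->
  logn q ((k`! * (n - k)`!) ^ p * Phin p n)
  <= logn q (Gam (dn n) (p * k) * Gam (dn n) (p * (n - k))).
Proof.
move=> pq p0 kn.
have Phi0 : 0 < Phin p n.
  by rewrite /Phin prodn_cond_gt0 // => i /andP[pi _]; rewrite expn_gt0 prime_gt0.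
have Hd : forall e, q ^ e <= n -> q ^ e %| dn n.
  by move=> e h; apply: dn_dvd => //; rewrite expn_gt0 prime_gt0.
rewrite lognM ?expn_gt0 ?muln_gt0 ?fact_gt0 // lognX lognM ?fact_gt0 //.
rewrite lognM ?Gam_gt0 ?dn_gt0 //.
have nE : n < n.+1 by [].
rewrite (logn_fact_ext pq kn nE) (logn_fact_ext pq (leq_subr k n) nE).
apply: leq_trans (leq_add (logn_Gam (p * k) n.+1 pq (dn_gt0 n) Hd)
                          (logn_Gam (p * (n - k)) n.+1 pq (dn_gt0 n) Hd)).
set F := fun e => (q ^ e <= n) * (p * (k %/ q ^ e) + p * ((n - k) %/ q ^ e)).
set G := fun e => (q ^ e <= n) * ((p * k) %/ q ^ e + (p * (n - k)) %/ q ^ e).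
have EF : p * (\sum_(1 <= e < n.+1) (q ^ e <= n) * (k %/ q ^ e) +
   \sum_(1 <= e < n.+1) (q ^ e <= n) * ((n - k) %/ q ^ e)) = \sum_(1 <= e < n.+1) F e.
  rewrite mulnDr !big_distrr /= -big_split /=; apply: eq_bigr => e _; rewrite /F; ring.
have EG : \sum_(1 <= e < n.+1) (q ^ e <= n) * ((p * k) %/ q ^ e) +
  \sum_(1 <= e < n.+1) (q ^ e <= n) * ((p * (n - k)) %/ q ^ e) = \sum_(1 <= e < n.+1) G e.
  by rewrite /G -big_split /=; apply: eq_bigr => e _; ring.
rewrite EF EG.
apply: leq_trans (leq_add (leqnn _) (logn_Phin p n pq)) _.
have fle : forall e, F e <= G e.
  move=> e; rewrite /F /G leq_mul2l; apply/orP; right.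
  have Q0 : 0 < q ^ e by rewrite expn_gt0 prime_gt0.
  by apply: leq_add; apply: mul_div_le.
case: ifP => [/andP[qn rel]|_]; last by rewrite addn0; apply: leq_sum => e _; apply: fle.
have n1 : 1 < n.+1 by apply: leq_ltn_trans (prime_gt0 pq) _.
rewrite [\sum_(1 <= e < n.+1) F e]big_ltn // [\sum_(1 <= e < n.+1) G e]big_ltn //.
have h1 : \sum_(2 <= i < n.+1) F i <= \sum_(2 <= i < n.+1) G i by apply: leq_sum => e _; apply: fle.
have h2 : F 1 + phi p (n%:R / q%:R)%R <= G 1.
  rewrite /G /F !expn1 qn !mul1n; move: (@phi_bound p n k q pq kn); lia.
move: h1 h2; clearbody F G.
move: (\sum_(2 <= i < n.+1) F i) (\sum_(2 <= i < n.+1) G i) (F 1) (G 1) (phi p (n%:R / q%:R)%R).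
move=> a b c d e; lia.
Qed.

Definition Lam p d M := \prod_(m < M) \prod_(1 <= j < p) gcdn (p * m + j) d.

Lemma Gam_block p d M : 0 < p ->
  Gam d (p * M) %| Lam p d M * (p ^ M * M`!).
Proof.
move=> p0; elim: M => [|M IH]; first by rewrite muln0 /Gam big_geq.
have split : Gam d (p * M.+1) =
   Gam d (p * M) * (\prod_(1 <= j < p) gcdn (p * M + j) d) * gcdn (p * M.+1) d.
  rewrite /Gam (big_cat_nat _ (n := (p * M).+1)) //=; last by rewrite ltnS leq_mul2l leqnSn orbT.
  rewrite -mulnA; congr (_ * _).
  rewrite mulnS big_nat_recr /=; last by lia.
  congr (_ * _).
  rewrite (_ : (p * M).+1 = 1 + p * M) //.
  rewrite big_addn addnK; apply: eq_bigr => j _; by rewrite addnC.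
rewrite split /Lam big_ord_recr /= expnS factS.
have h : gcdn (p * M.+1) d %| p * M.+1 by apply: dvdn_gcdl.
rewrite (_ : Lam p d M * \prod_(1 <= j < p) gcdn (p * M + j) d * (p * p ^ M * (M.+1 * M`!))
  = (Lam p d M * (p ^ M * M`!)) * \prod_(1 <= j < p) gcdn (p * M + j) d * (p * M.+1)); last first.
  rewrite /Lam; ring.
by apply: dvdn_mul => //; apply: dvdn_mul.
Qed.

Definition absA p k j l := if l < k then p * (k - l) - j else j + p * (l - k).

Lemma prod_g p n k d : k <= n ->
  \prod_(1 <= j < p) \prod_(0 <= l < n) gcdn (absA p k j l) d = Lam p d k * Lam p d (n - k).
Proof.
move=> kn; rewrite exchange_big_nat /= (big_cat_nat _ (n := k)) //=.
congr (_ * _).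
  rewrite big_nat_rev /= /Lam big_mkord; apply: eq_bigr => [[l hl]] _ /=.
  rewrite add0n big_nat_rev /=; apply: eq_big_nat => j /andP[j1 jp].
  rewrite /absA (_ : k - l.+1 < k); last by lia.
  congr gcdn; rewrite (_ : k - (k - l.+1) = l.+1); last by lia.
  rewrite mulnS; lia.
rewrite -{1}(add0n k) big_addn /Lam big_mkord; apply: eq_bigr => [[m hm]] _ /=.
apply: eq_big_nat => j /andP[j1 jp]; rewrite /absA ltnNge leq_addl /= addnK; congr gcdn; lia.
Qed.

Lemma main_dvd p n k s : 0 < p -> k <= n ->
  (k`! * (n - k)`!) ^ (p - 1 + s) * Phin p n
  %| p ^ n * (n`! ^ s) * \prod_(1 <= j < p) \prod_(0 <= l < n) gcdn (absA p k j l) (dn n).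
Proof.
move=> p0 kn; rewrite prod_g //.
set K := k`! * (n - k)`!.
have K0 : 0 < K by rewrite muln_gt0 !fact_gt0.
have h1 : K ^ p * Phin p n %| Gam (dn n) (p * k) * Gam (dn n) (p * (n - k)).
  apply: dvdn_logn.
  - by rewrite muln_gt0 expn_gt0 K0 /Phin prodn_cond_gt0 // => i /andP[pi _]; rewrite expn_gt0 prime_gt0.
  - by rewrite muln_gt0 !Gam_gt0 ?dn_gt0.
  by move=> q pq; apply: key_ineq.
have h2 := dvdn_mul (Gam_block (dn n) k p0) (Gam_block (dn n) (n - k) p0).
have h3 : K ^ (p - 1) * Phin p n * K %| p ^ n * (Lam p (dn n) k * Lam p (dn n) (n - k)) * K.
  have -> : K ^ (p - 1) * Phin p n * K = K ^ p * Phin p n.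
    by rewrite mulnAC -expnSr subn1 prednK.
  apply: dvdn_trans h1 _; apply: dvdn_trans h2 _.
  have -> : p ^ n = p ^ k * p ^ (n - k) by rewrite -expnD subnKC.
  suff -> : p ^ k * p ^ (n - k) * (Lam p (dn n) k * Lam p (dn n) (n - k)) * K =
    Lam p (dn n) k * (p ^ k * k`!) * (Lam p (dn n) (n - k) * (p ^ (n - k) * (n - k)`!)) by [].
  rewrite /K; ring.
rewrite dvdn_pmul2r // in h3.
have h4 : K ^ s %| n`! ^ s by apply: dvdn_exp2r; rewrite /K -(bin_fact kn) dvdn_mull.
have := dvdn_mul h4 h3.
set L := Lam p (dn n) k * Lam p (dn n) (n - k).
suff -> : K ^ (p - 1 + s) * Phin p n = K ^ s * (K ^ (p - 1) * Phin p n).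
  suff -> : p ^ n * n`! ^ s * L = n`! ^ s * (p ^ n * L) by [].
  ring.
rewrite expnD; ring.
Qed.

Local Open Scope ring_scope.

Definition adapted (d : rat) (f : {poly rat}) := forall v : nat, d ^+ v * f`_v \is a Num.int.

Lemma adaptedM d f g : adapted d f -> adapted d g -> adapted d (f * g).
Proof.
move=> hf hg v; rewrite coefM mulr_sumr rpred_sum // => [[j hj]] _ /=.
have -> : d ^+ v * (f`_j * g`_(v - j)) = (d ^+ j * f`_j) * (d ^+ (v - j) * g`_(v - j)).
  by rewrite -{1}(subnKC (ltnSE hj)) exprD; ring.
by rewrite rpredM.
Qed.

Lemma adapted1 d : adapted d 1.
Proof. by move=> [|v]; rewrite coefC /= ?mulr1 ?mulr0 ?expr0 ?rpred0 ?rpred1. Qed.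

Lemma adapted_prod d (I : Type) (r : seq I) (P : pred I) (F : I -> {poly rat}) :
  (forall i, P i -> adapted d (F i)) -> adapted d (\prod_(i <- r | P i) F i).
Proof.
move=> H; elim: r => [|x r IH]; first by rewrite big_nil; apply: adapted1.
by rewrite big_cons; case: ifP => // Px; apply: adaptedM => //; apply: H.
Qed.

Lemma adapted_exp d f e : adapted d f -> adapted d (f ^+ e).
Proof.
move=> h; elim: e => [|e IH]; first by rewrite expr0; apply: adapted1.
by rewrite exprS; apply: adaptedM.
Qed.

Lemma adaptedZ d c f : c \is a Num.int -> adapted d f -> adapted d (c *: f).
Proof.
by move=> hc hf v; rewrite coefZ mulrCA rpredM.
Qed.

Lemma adapted_lin d a b : a \is a Num.int -> d * b \is a Num.int ->
  adapted d (b *: 'X + a%:P).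
Proof.
move=> ha hb [|[|v]]; rewrite coefD coefZ coefX coefC /=.
- by rewrite expr0 mul1r mulr0 add0r.
- by rewrite expr1 mulr1 addr0.
by rewrite mulr0 addr0 mulr0 rpred0.
Qed.

Lemma rec_int (d Phi : rat) (H N : {poly rat}) (c : nat -> rat) Pn :
  H`_0 != 0 -> Phi != 0 -> adapted d ((H`_0)^-1 *: H) ->
  adapted d ((H`_0 * Phi)^-1 *: N) ->
  (forall m, (m < Pn)%N -> N`_m = \sum_(w < m.+1) c w * H`_(m - w)) ->
  forall m, (m < Pn)%N -> d ^+ m * c m / Phi \is a Num.int.
Proof.
move=> H0 P0 hH hN hrec; elim/ltn_ind => m IH mP.
have e := hrec m mP; rewrite big_ord_recr /= subnn in e.
set S := \sum_(i < m) _ in e.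
have cm : c m = (N`_m - S) / H`_0 by rewrite e; field.
have -> : d ^+ m * c m / Phi = d ^+ m * ((H`_0 * Phi)^-1 *: N)`_m
   - \sum_(i < m) (d ^+ i * c i / Phi) * (d ^+ (m - i) * ((H`_0)^-1 *: H)`_(m - i)).
  rewrite (eq_bigr (fun i : 'I_m => d ^+ m / (H`_0 * Phi) * (c i * H`_(m - i)))); last first.
    move=> [i hi] _ /=; rewrite coefZ.
    have -> : d ^+ m = d ^+ i * d ^+ (m - i) by rewrite -exprD subnKC // ltnW.
    field.
    by apply/andP.
  rewrite -mulr_sumr coefZ cm /S; field; by apply/andP.
rewrite rpredB // rpred_sum // => [[i hi]] _ /=.
rewrite rpredM //; first by apply: IH => //; apply: ltn_trans mP.
Qed.

Local Close Scope ring_scope.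
Local Open Scope ring_scope.

Definition Lpol (k l : nat) : {poly rat} := 'X + (l%:R - k%:R)%:P.
Definition Hpol (P n k : nat) : {poly rat} :=
  \prod_(l < n.+1 | (l : nat) != k) Lpol k l ^+ P.
Definition Qpol (P n k i' k' : nat) : {poly rat} :=
  (\prod_(l < n.+1 | (l : nat) != k') Lpol k l ^+ P) * Lpol k k' ^+ (P - i').
Definition NumP (p s n k : nat) : {poly rat} :=
  ((p ^ (p * n))%:R * (n`! ^ s)%:R) *:
  (('X - (k%:R)%:P) ^+ M0 p s *
   \prod_(1 <= j < p) \prod_(l < n) ('X + (l%:R + j%:R / p%:R - k%:R)%:P)).

Lemma Lpol_eval k l (t : rat) : (Lpol k l).[t + k%:R] = t + l%:R.
Proof. by rewrite /Lpol hornerD hornerX hornerC; ring. Qed.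

Lemma poch_neq0 t n : (forall k, (k <= n)%N -> t + k%:R != 0) -> poch t n.+1 != 0.
Proof.
move=> h; rewrite /poch; apply/prodf_neq0 => i _; apply: h; exact: ltnSE (ltn_ord i).
Qed.

Lemma poch_split t n k' : (k' <= n)%N ->
  poch t n.+1 = (t + k'%:R) * \prod_(l < n.+1 | (l : nat) != k') (t + l%:R).
Proof.
move=> kn; rewrite /poch (bigD1 (Ordinal (kn : (k' < n.+1)%N))) //=.
Qed.

Lemma Qpol_eval P n k i' k' (t : rat) : (i' <= P)%N -> (k' <= n)%N -> t + k'%:R != 0 ->
  (Qpol P n k i' k').[t + k%:R] = poch t n.+1 ^+ P / (t + k'%:R) ^+ i'.
Proof.
move=> iP kn tk; rewrite /Qpol hornerM horner_exp horner_prod Lpol_eval.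
rewrite (poch_split t kn) exprMn.
under eq_bigr => l _ do rewrite horner_exp Lpol_eval.
rewrite prodrXl.
have -> : (t + k'%:R) ^+ P = (t + k'%:R) ^+ (P - i') * (t + k'%:R) ^+ i'.
  by rewrite -exprD subnK.
field; by rewrite expf_neq0.
Qed.

Lemma NumP_eval p s n k (t : rat) : (0 < p)%N ->
  (forall k, (k <= n)%N -> t + k%:R != 0) ->
  (NumP p s n k).[t + k%:R] = Rn p s n t * poch t n.+1 ^+ (p - 1 + s).
Proof.
move=> p0 h; have hp := poch_neq0 h.
rewrite /NumP /Rn hornerZ hornerM horner_exp hornerXsubC horner_prod.
under eq_bigr => j _ do rewrite horner_prod.
have -> : t + k%:R - k%:R = t by ring.
rewrite (eq_bigr (fun j => poch (t + j%:R / p%:R) n)); last first.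
  move=> j _; rewrite /poch; apply: eq_bigr => l _; rewrite hornerD hornerX hornerC; ring.
field; by rewrite expf_neq0.
Qed.

Lemma poly_id p s n k (r : nat -> nat -> rat) : (0 < p)%N ->
  (forall t : rat, (forall k, (k <= n)%N -> t + k%:R != 0) ->
     Rn p s n t =
     \sum_(1 <= i < (p - 1 + s).+1) \sum_(1 <= k < n.+1) r i k / (t + k%:R) ^+ i) ->
  NumP p s n k = \sum_(1 <= i < (p - 1 + s).+1) \sum_(1 <= k' < n.+1)
                   r i k' *: Qpol (p - 1 + s) n k i k'.
Proof.
move=> p0 hyp; apply/eqP; rewrite -subr_eq0; apply/eqP.
set D := _ - _.
apply: (@roots_geq_poly_eq0 _ _ [seq (T.+1)%:R + k%:R | T <- iota 0 (size D)]).
- apply/allP => x /mapP [T _ ->]; rewrite /root.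
  set t : rat := (T.+1)%:R.
  have ht : forall k', (k' <= n)%N -> t + k'%:R != 0.
    by move=> k' _; rewrite /t -natrD pnatr_eq0.
  rewrite /D hornerD hornerN NumP_eval // horner_sum (hyp t ht) mulr_suml.
  rewrite subr_eq0; apply/eqP; apply: eq_big_nat => i /andP[i1 iP].
  rewrite horner_sum mulr_suml; apply: eq_big_nat => k' /andP[k1 kn].
  have iP' : (i <= p - 1 + s)%N by rewrite -ltnS.
  have kn' : (k' <= n)%N by rewrite -ltnS.
  rewrite hornerZ Qpol_eval //.
    by rewrite mulrAC -mulrA.
  by apply: ht.
- have inj : injective (fun T : nat => (T.+1)%:R + k%:R : rat).
    by move=> a b /addIr /eqP; rewrite eqr_nat eqSS => /eqP.
  have := iota_uniq 0 (size D); rewrite -(map_inj_uniq inj) => h.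
  exact: h.
by rewrite size_map size_iota.
Qed.

Local Close Scope ring_scope.
Local Open Scope ring_scope.

Lemma Lpol_kk k : Lpol k k = 'X.
Proof. by rewrite /Lpol subrr addr0. Qed.

Lemma coefQ_ne P n k i' k' m : (k <= n)%N -> k' != k -> (m < P)%N ->
  (Qpol P n k i' k')`_m = 0.
Proof.
move=> kn ne mP; rewrite /Qpol (bigD1 (Ordinal (kn : (k < n.+1)%N))) /=; last by rewrite eq_sym.
by rewrite Lpol_kk -!mulrA coefXnM mP.
Qed.

Lemma coefQ_eq P n k i' m :
  (Qpol P n k i' k)`_m = if (m < P - i')%N then 0 else (Hpol P n k)`_(m - (P - i')).
Proof. by rewrite /Qpol Lpol_kk coefMXn. Qed.

Lemma coef_NumP p s n k (r : nat -> nat -> rat) : (0 < p)%N -> (1 <= k <= n)%N ->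
  (forall t : rat, (forall k, (k <= n)%N -> t + k%:R != 0) ->
     Rn p s n t =
     \sum_(1 <= i < (p - 1 + s).+1) \sum_(1 <= k < n.+1) r i k / (t + k%:R) ^+ i) ->
  forall m, (m < p - 1 + s)%N ->
  (NumP p s n k)`_m = \sum_(w < m.+1) r (p - 1 + s - w)%N k * (Hpol (p - 1 + s) n k)`_(m - w).
Proof.
move=> p0 /andP[k1 kn] hyp m mP.
set P := (p - 1 + s)%N in mP *.
rewrite (poly_id k p0 hyp) coef_sum.
rewrite (eq_big_nat _ _ (F2 := fun i => r i k * (if (m < P - i)%N then 0
                          else (Hpol P n k)`_(m - (P - i))))); last first.
  move=> i /andP[i1 iP]; rewrite coef_sum (bigD1_seq k) /=; last by apply: iota_uniq.
    rewrite big1 ?addr0; first by rewrite coefZ coefQ_eq.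
    by move=> k' ne; rewrite coefZ coefQ_ne // mulr0.
  by rewrite mem_index_iota k1 ltnS.
rewrite big_add1 /= big_nat_rev /=.
rewrite (big_cat_nat _ (n := m.+1)) //= [X in _ + X]big1_seq ?addr0; last first.
  move=> w /andP[_]; rewrite mem_index_iota => /andP[mw wP].
  by rewrite add0n subnS prednK ?subn_gt0 // subKn ?mw ?mulr0 // ltnW.
rewrite big_mkord; apply: eq_bigr => [[w hw]] _ /=.
have wP : (w < P)%N by apply: leq_trans hw mP.
have -> : (P - w.+1).+1 = (P - w)%N by lia.
have -> : (P - (P - w) = w)%N by lia.
by rewrite ltnNge -ltnS hw.
Qed.

Local Close Scope ring_scope.
Local Open Scope ring_scope.

Lemma nat_int (m : nat) : (m%:R : rat) \is a Num.int.
Proof. exact: rpred_nat. Qed.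

Lemma div_int (a b : nat) : (0 < b)%N -> (b %| a)%N -> (a%:R / b%:R : rat) \is a Num.int.
Proof.
move=> b0 /dvdnP [c ->]; rewrite natrM mulfK ?nat_int //.
by rewrite pnatr_eq0 -lt0n.
Qed.

Lemma dn_div_int n c : (0 < c)%N -> (c <= n)%N -> ((dn n)%:R / c%:R : rat) \is a Num.int.
Proof. by move=> c0 cn; apply: div_int => //; apply: dn_dvd. Qed.

Lemma dn_lk_int n l k : (l <= n)%N -> (k <= n)%N -> l != k ->
  (dn n)%:R * (l%:R - k%:R : rat)^-1 \is a Num.int.
Proof.
move=> ln kn ne; case: (ltngtP l k) => [lk|kl|e]; last by rewrite e eqxx in ne.
- rewrite (_ : l%:R - k%:R = - (k - l)%:R); last by rewrite natrB ?(ltnW lk) //; ring.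
  by rewrite invrN mulrN rpredN dn_div_int ?subn_gt0 //; lia.
- rewrite -natrB ?(ltnW kl) //.
  by rewrite dn_div_int ?subn_gt0 //; lia.
Qed.

Lemma coef0X (f : {poly rat}) e : (f ^+ e)`_0 = f`_0 ^+ e.
Proof.
elim: e => [|e IH]; first by rewrite !expr0 coefC.
by rewrite !exprS coef0M IH.
Qed.

Lemma Lpol0 k l : (Lpol k l)`_0 = l%:R - k%:R.
Proof. by rewrite /Lpol coefD coefX coefC /= add0r. Qed.

Lemma Hpol0 P n k : (Hpol P n k)`_0 = \prod_(l < n.+1 | (l : nat) != k) (l%:R - k%:R) ^+ P.
Proof.
rewrite /Hpol coef0_prod; apply: eq_bigr => l _; by rewrite coef0X Lpol0.
Qed.

Lemma Hpol0_neq0 P n k : (Hpol P n k)`_0 != 0.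
Proof.
rewrite Hpol0; apply/prodf_neq0 => l ne; rewrite expf_neq0 // subr_eq0 eqr_nat.
exact: ne.
Qed.

Lemma stepA P n k : (k <= n)%N ->
  adapted (dn n)%:R (((Hpol P n k)`_0)^-1 *: Hpol P n k).
Proof.
move=> kn.
have -> : ((Hpol P n k)`_0)^-1 *: Hpol P n k =
   \prod_(l < n.+1 | (l : nat) != k) (((l%:R - k%:R)^-1 *: Lpol k l) ^+ P).
  under [RHS]eq_bigr => l _ do rewrite exprZn.
  rewrite scaler_prod Hpol0 -prodfV; congr (_ *: _).
  by apply: eq_bigr => l _; rewrite exprVn.
apply: adapted_prod => l ne; apply: adapted_exp.
have ne' : (l%:R - k%:R : rat) != 0 by rewrite subr_eq0 eqr_nat.
rewrite /Lpol scalerDr scale_polyC mulVf //.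
apply: adapted_lin; first exact: rpred1.
by apply: dn_lk_int => //; rewrite -ltnS.
Qed.

Local Close Scope ring_scope.

Lemma prod_abs n k : k <= n ->
  \prod_(l < n.+1 | (l : nat) != k) ((k - l) + (l - k)) = k`! * (n - k)`!.
Proof.
move=> kn.
rewrite -(big_mkord (fun l => l != k) (fun l => (k - l) + (l - k))).
rewrite (big_cat_nat _ (n := k)) //=; last by rewrite ltnW.
congr (_ * _).
  rewrite big_nat_cond (eq_bigl (fun l => (0 <= l < k) && true)); last first.
    move=> l; rewrite andbT; apply/idP/idP => [/andP[] //|h]; rewrite h /=.
    by case/andP: h => _ h; rewrite ltn_eqF.
  rewrite -big_nat_cond big_nat_rev /= fact_prod big_add1 /=.
  apply: eq_big_nat => l /andP[_ lk]; lia.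
rewrite big_ltn_cond // eqxx /=.
rewrite big_nat_cond (eq_bigl (fun l => (k.+1 <= l < n.+1) && true)); last first.
  move=> l; rewrite andbT; apply/idP/idP => [/andP[] //|h]; rewrite h /=.
  by case/andP: h => h _; rewrite gtn_eqF.
rewrite -big_nat_cond fact_prod.
rewrite -{1}(add1n k) big_addn.
have -> : (n.+1 - k = (n - k).+1)%N by rewrite subSn.
by apply: eq_big_nat => l /andP[l1 _]; lia.
Qed.

Local Open Scope ring_scope.

Definition sgn1 (x : rat) := (x == 1) || (x == -1).

Lemma sgn1M x y : sgn1 x -> sgn1 y -> sgn1 (x * y).
Proof.
by case/orP => /eqP -> /orP[] /eqP ->; rewrite /sgn1 ?mul1r ?mulN1r ?opprK eqxx ?orbT.
Qed.

Lemma sgn1_prod (I : Type) (r : seq I) (P : pred I) (F : I -> rat) :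
  (forall i, P i -> sgn1 (F i)) -> sgn1 (\prod_(i <- r | P i) F i).
Proof.
move=> h; elim: r => [|x r IH]; first by rewrite big_nil /sgn1 eqxx.
by rewrite big_cons; case: ifP => // Px; apply: sgn1M => //; apply: h.
Qed.

Lemma sgn1X x e : sgn1 x -> sgn1 (x ^+ e).
Proof.
move=> h; elim: e => [|e IH]; first by rewrite expr0 /sgn1 eqxx.
by rewrite exprS sgn1M.
Qed.

Lemma sgn1_int x : sgn1 x -> x \is a Num.int.
Proof. by case/orP => /eqP ->; rewrite ?rpredN rpred1. Qed.

Lemma sgn1_inv x : sgn1 x -> x^-1 = x.
Proof. by case/orP => /eqP ->; rewrite ?invrN invr1. Qed.

Lemma H0_sign P n k : (k <= n)%N -> exists2 sg : rat, sgn1 sg &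
  (Hpol P n k)`_0 = sg * ((k`! * (n - k)`!) ^ P)%:R.
Proof.
move=> kn; rewrite Hpol0.
exists (\prod_(l < n.+1 | (l : nat) != k) ((if (l < k)%N then -1 else 1) ^+ P)).
  by apply: sgn1_prod => l _; apply: sgn1X; case: ifP; rewrite /sgn1 eqxx ?orbT.
rewrite natrX -prod_abs // natr_prod -prodrXl -big_split /=.
apply: eq_bigr => l _; rewrite -exprMn; congr (_ ^+ _).
case: ltnP => h.
  rewrite (_ : (l - k)%N = 0%N) ?addn0 ?natrB ?mulN1r ?opprB ?mul1r //; lia.
rewrite (_ : (k - l)%N = 0%N) ?add0n ?natrB ?mul1r //; lia.
Qed.

Local Close Scope ring_scope.
Local Open Scope ring_scope.

Definition inner (p n k j l : nat) : {poly rat} :=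
  (p%:R / (gcdn (absA p k j l) (dn n))%:R) *: 'X +
  ((j%:R + p%:R * (l%:R - k%:R)) / (gcdn (absA p k j l) (dn n))%:R)%:P.

Lemma Lj_decomp p n k j l : (0 < p)%N ->
  ('X + (l%:R + j%:R / p%:R - k%:R)%:P : {poly rat}) =
  ((gcdn (absA p k j l) (dn n))%:R / p%:R) *: inner p n k j l.
Proof.
move=> p0; rewrite /inner.
have g0 : ((gcdn (absA p k j l) (dn n))%:R : rat) != 0.
  by rewrite pnatr_eq0 -lt0n gcdn_gt0 dn_gt0 orbT.
have hp : (p%:R : rat) != 0 by rewrite pnatr_eq0 -lt0n.
rewrite scalerDr scalerA scale_polyC.
set g := ((gcdn (absA p k j l) (dn n))%:R : rat).
rewrite (_ : g / p%:R * (p%:R / g) = 1); last by field; apply/andP.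
rewrite scale1r; congr (_ + _%:P); field; by apply/andP.
Qed.

Lemma a_eq p k j l : (j < p)%N ->
  (j%:R + p%:R * (l%:R - k%:R) : rat) = (if (l < k)%N then -1 else 1) * (absA p k j l)%:R.
Proof.
move=> jp; rewrite /absA; case: ltnP => h.
  have hj : (j <= p * (k - l))%N.
    by apply: leq_trans (ltnW jp) _; rewrite leq_pmulr // subn_gt0.
  by rewrite natrB // natrM natrB ?(ltnW h) //; ring.
by rewrite natrD natrM natrB //; ring.
Qed.

Lemma inner_adapted p n k j l : (0 < p)%N -> (j < p)%N ->
  adapted (dn n)%:R (inner p n k j l).
Proof.
move=> p0 jp; rewrite /inner.
have g0 : (0 < gcdn (absA p k j l) (dn n))%N by rewrite gcdn_gt0 dn_gt0 orbT.
apply: adapted_lin.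
  rewrite a_eq // -mulrA rpredM //; first by case: ifP; rewrite ?rpredN rpred1.
  by apply: div_int => //; apply: dvdn_gcdl.
rewrite mulrCA rpredM ?nat_int //.
by apply: div_int => //; apply: dvdn_gcdr.
Qed.

Lemma NumP_decomp p s n k : (0 < p)%N ->
  NumP p s n k =
  ((p ^ (p * n))%:R * (n`! ^ s)%:R *
     \prod_(1 <= j < p) \prod_(l < n) ((gcdn (absA p k j l) (dn n))%:R / p%:R))
  *: (('X - (k%:R)%:P) ^+ M0 p s * \prod_(1 <= j < p) \prod_(l < n) inner p n k j l).
Proof.
move=> p0; rewrite /NumP.
rewrite (eq_bigr (fun j => \prod_(l < n) (((gcdn (absA p k j l) (dn n))%:R / p%:R) *: inner p n k j l))); last first.
  by move=> j _; apply: eq_bigr => l _; apply: Lj_decomp.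
under eq_bigr => j _ do rewrite scaler_prod.
by rewrite scaler_prod -scalerAr scalerA.
Qed.

Lemma const_eq p s n k : (0 < p)%N ->
  ((p ^ (p * n))%:R * (n`! ^ s)%:R *
     \prod_(1 <= j < p) \prod_(l < n) ((gcdn (absA p k j l) (dn n))%:R / p%:R) : rat)
  = (p ^ n * n`! ^ s * \prod_(1 <= j < p) \prod_(0 <= l < n) gcdn (absA p k j l) (dn n))%:R.
Proof.
move=> p0.
have hp : (p%:R : rat) != 0 by rewrite pnatr_eq0 -lt0n.
under eq_bigr => j _ do rewrite big_split /= prodr_const card_ord.
rewrite big_split /= prodr_const_nat.
rewrite !natrM natr_prod.
have -> : \prod_(1 <= i < p) \prod_(i0 < n) ((gcdn (absA p k i i0) (dn n))%:R : rat)
   = \prod_(1 <= i < p) ((\prod_(0 <= l < n) gcdn (absA p k i l) (dn n))%:R).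
  by apply: eq_bigr => j _; rewrite natr_prod big_mkord.
have hq : (p ^ (p * n))%:R * (p%:R^-1 ^+ n ^+ (p - 1)) = (p ^ n)%:R :> rat.
  rewrite -exprM !natrX.
  have -> : (p * n = n + n * (p - 1))%N by rewrite mulnC -{1}(subnK p0) mulnDr muln1 addnC.
  by rewrite exprD exprVn -mulrA mulfV ?mulr1 // expf_neq0.
rewrite -hq; ring.
Qed.

Lemma adapted_prod_nat d m n (F : nat -> {poly rat}) :
  (forall i, (m <= i < n)%N -> adapted d (F i)) -> adapted d (\prod_(m <= i < n) F i).
Proof.
by move=> h; rewrite big_nat_cond; apply: adapted_prod => i /andP[hi _]; apply: h.
Qed.

Lemma stepB p s n k : (0 < p)%N -> (k <= n)%N ->
  adapted (dn n)%:R ((((Hpol (p - 1 + s) n k)`_0) * (Phin p n)%:R)^-1 *: NumP p s n k).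
Proof.
move=> p0 kn; have [sg hsg H0e] := H0_sign (p - 1 + s) kn.
rewrite NumP_decomp // const_eq // scalerA.
apply: adaptedZ.
  rewrite H0e -mulrA invfM sgn1_inv // -mulrA; apply: rpredM; first exact: sgn1_int.
  rewrite -natrM mulrC; apply: div_int; last exact: main_dvd.
  rewrite muln_gt0 expn_gt0 muln_gt0 !fact_gt0 /=.
  by rewrite /Phin prodn_cond_gt0 // => i /andP[pi _]; rewrite expn_gt0 prime_gt0.
apply: adaptedM.
  apply: adapted_exp; rewrite -polyCN -(scale1r 'X).
  by apply: adapted_lin; rewrite ?rpredN ?mulr1 nat_int.
apply: adapted_prod_nat => j /andP[_ jp].
apply: adapted_prod => l _; exact: inner_adapted.
Qed.

Local Close Scope ring_scope.
Unset Implicit Arguments.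
Local Open Scope ring_scope.

Theorem lemma5p4 (p s n : nat) (r : nat -> nat -> rat) :
  prime p -> (5 <= p)%N -> (0 < s)%N -> ((p + s) ^ 4 < n)%N ->
  (forall t : rat, (forall k : nat, (k <= n)%N -> t + k%:R != 0) ->
     Rn p s n t =
     \sum_(1 <= i < (p - 1 + s).+1) \sum_(1 <= k < n.+1) r i k / (t + k%:R) ^+ i) ->
  forall i k : nat, (1 <= i <= p - 1 + s)%N -> (1 <= k <= n)%N ->
    (dn n ^ (p - 1 + s - i))%:R * r i k / (Phin p n)%:R \is a Num.int.
Proof.
move=> pp _ _ _ hyp i k /andP[i1 iP] hk.
have p0 := prime_gt0 pp.
have kn : (k <= n)%N by case/andP: hk.
have Phi0 : ((Phin p n)%:R : rat) != 0.
  rewrite pnatr_eq0 -lt0n /Phin prodn_cond_gt0 // => q /andP[pq _].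
  by rewrite expn_gt0 prime_gt0.
have mP : (p - 1 + s - i < p - 1 + s)%N.
  by rewrite ltn_subrL; apply/andP; split => //; apply: leq_trans i1 iP.
have := @rec_int (dn n)%:R (Phin p n)%:R (Hpol (p - 1 + s) n k) (NumP p s n k)
  (fun w => r (p - 1 + s - w)%N k) (p - 1 + s) (Hpol0_neq0 _ _ _) Phi0
  (stepA (p - 1 + s) kn) (stepB s p0 kn) (coef_NumP p0 hk hyp) _ mP.
by rewrite subKn // natrX.
Qed.
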